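(* Let $F(u):=\tilde{\mathcal E}_0(u)/\zeta(u)-E$, a formal power series in $u$ with operator coefficients, written $F(u)=\sum_{k\ge1}F_ku^k$. Then, as formal series in $z$: (i) $\mathcal D^{(p)}(z)=F(z)=\tilde{\mathcal E}_0(z)/\zeta(z)-E$; (ii) $\mathcal D^{(h)}(z)=\exp\Big(\sum_{k\ge1}F_k\,\big(z^2\tfrac{d}{dz}\big)^k(\log z)\Big)$ (written in the paper as $z^{F(z^2 d/dz)}$); (iii) $\mathcal D^{(\sigma)}(z)=\exp\Big(-\sum_{k\ge1}F_k\,\big(-z^2\tfrac{d}{dz}\big)^k(\log z)\Big)$ (written as $z^{-F(-z^2d/dz)}$). Moreover $\mathcal D^{(h)}(z)=\mathcal D^{(\sigma)}(-z)^{-1}$.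
   Context: $V_0$ is the charge-zero semi-infinite wedge space with basis $v_\lambda=z^{\lambda_1}\wedge z^{\lambda_2-1}\wedge z^{\lambda_3-2}\wedge\cdots$ indexed by all partitions $\lambda$. The energy operator is $E v_\lambda=|\lambda|v_\lambda$. With $\zeta(u)=e^{u/2}-e^{-u/2}$, the Casimir operator is $\tilde{\mathcal E}_0(u)v_\lambda=\sum_{i\ge1}\big(e^{u(\lambda_i-i+\frac12)}-e^{u(-i+\frac12)}\big)v_\lambda$. For $\lambda\vdash n$, $\mathsf{cr}^\lambda$ is the vector of contents (column index minus row index) of the $n$ boxes of $\lambda$. $p_k,h_k,\sigma_k$ denote power sums, complete homogeneous and elementary symmetric polynomials. The operators $\mathcal D^{(p)},\mathcal D^{(h)},\mathcal D^{(\sigma)}$ are diagonal in the basis $v_\lambda$: $\mathcal D^{(p)}(z)v_\lambda=\sum_{k\ge1}\frac{z^k}{k!}p_k(\mathsf{cr}^\lambda)v_\lambda$, $\mathcal D^{(h)}(z)v_\lambda=\sum_{k\ge0}z^kh_k(\mathsf{cr}^\lambda)v_\lambda$, $\mathcal D^{(\sigma)}(z)v_\lambda=\sum_{k\ge0}z^k\sigma_k(\mathsf{cr}^\lambda)v_\lambda$. *)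

(* Defs.v *)
From HB Require Import structures.
From mathcomp Require Import all_boot all_order all_algebra.
Set Implicit Arguments. Unset Strict Implicit. Unset Printing Implicit Defensive.
Import Order.TTheory GRing.Theory Num.Theory.
Local Open Scope ring_scope.

Definition is_partition (la : seq nat) : bool :=
  sorted geq la && all (fun x => 0 < x)%N la.

Definition psize (la : seq nat) : nat := sumn la.

Section Defs.
Variable R : numFieldType.

Definition contents (la : seq nat) : seq R :=
  flatten [seq [seq (j%:R - r%:R) | j <- iota 0 (nth 0%N la r)] | r <- iota 0 (size la)].

Definition psym (k : nat) (xs : seq R) : R := \sum_(x <- xs) x ^+ k.

Definition hsym (k : nat) (xs : seq R) : R :=
  \sum_(m : {ffun 'I_(size xs) -> 'I_k.+1} | (\sum_(i < size xs) (m i : nat) == k)%N)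
     \prod_(i < size xs) xs`_i ^+ m i.

Definition esym (k : nat) (xs : seq R) : R :=
  \sum_(A : {set 'I_(size xs)} | #|A| == k) \prod_(i in A) xs`_i.

Definition fps := nat -> R.

Definition fps1 : fps := fun n => (n == 0%N)%:R.
Definition fpsC (c : R) : fps := fun n => (n == 0%N)%:R * c.
Definition fps_add (f g : fps) : fps := fun n => f n + g n.
Definition fps_sub (f g : fps) : fps := fun n => f n - g n.
Definition fps_opp (f : fps) : fps := fun n => - f n.
Definition fps_mul (f g : fps) : fps :=
  fun n => \sum_(i < n.+1) f i * g (n - i)%N.
Definition fps_pow (f : fps) (m : nat) : fps := iter m (fps_mul f) fps1.
Definition fps_negvar (f : fps) : fps := fun n => (-1) ^+ n * f n.
(* f(z)/z, for f with zero constant term *)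
Definition fps_divz (f : fps) : fps := fun n => f n.+1.

Fixpoint inv_list (f : fps) (n : nat) : seq R :=
  match n with
  | 0 => [:: (f 0%N)^-1]
  | n'.+1 => let l := inv_list f n' in
      rcons l (- (f 0%N)^-1 * \sum_(i < n'.+1) f i.+1 * nth 0 l (n' - i)%N)
  end.
Definition fps_inv (f : fps) : fps := fun n => nth 0 (inv_list f n) n.

(* Quotient f/g of two series with zero constant term, g having
   nonzero linear coefficient: (f/z) * (g/z)^{-1}. *)
Definition fps_div (f g : fps) : fps := fps_mul (fps_divz f) (fps_inv (fps_divz g)).

(* exp of a series with zero constant term: sum_m f^m/m!. *)
Definition fps_exp (f : fps) : fps :=
  fun n => \sum_(m < n.+1) fps_pow f m n / (m`!)%:R.

Definition exp_lin (a : R) : fps := fun k => a ^+ k / (k`!)%:R.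

(* An element (c, f) represents c * log z + f(z). *)
Definition logfps := (R * fps)%type.
Definition log_z : logfps := (1, fun _ => 0).
(* (s * z^2 d/dz)(c log z + f) = s*(c z + z^2 f'(z)) *)
Definition ztheta (s : R) (p : logfps) : logfps :=
  (0, fun n => s * (p.1 * (n == 1%N)%:R + (n.-1)%:R * p.2 n.-1)).

(* sum_(k>=1) F_k (s z^2 d/dz)^k (log z); for k >= 1 the result has no
   log z part and lowest order z^k, so coefficient n only involves k <= n. *)
Definition logsum (s : R) (F : fps) : fps :=
  fun n => \sum_(1 <= k < n.+1) F k * (iter k (ztheta s) log_z).2 n.

Definition zeta_ser : fps := fps_sub (exp_lin (1/2)) (exp_lin (-(1/2))).

(* Casimir: sum_{i>=1} (e^{u(la_i - i + 1/2)} - e^{u(-i+1/2)}); the terms with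
   i > size la vanish, rows indexed from 0 here (i = r+1). *)
Definition casimir (la : seq nat) : fps :=
  fun k => \sum_(r < size la)
    (exp_lin ((nth 0%N la r)%:R - r%:R - 1/2) k - exp_lin (- r%:R - 1/2) k).

Definition energy (la : seq nat) : fps := fpsC (psize la)%:R.

Definition Fser (la : seq nat) : fps :=
  fps_sub (fps_div (casimir la) zeta_ser) (energy la).

Definition Dp (la : seq nat) : fps :=
  fun k => if k is 0%N then 0 else psym k (contents la) / (k`!)%:R.
Definition Dh (la : seq nat) : fps := fun k => hsym k (contents la).
Definition Dsig (la : seq nat) : fps := fun k => esym k (contents la).

End Defs.

(* Main.v *)
Require Import Defs.
From HB Require Import structures.
From mathcomp Require Import all_boot all_order all_algebra.
From mathcomp Require Import zify ring.
From Stdlib Require Import FunctionalExtensionality.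
Set Implicit Arguments. Unset Strict Implicit. Unset Printing Implicit Defensive.
Import Order.TTheory GRing.Theory Num.Theory.
Local Open Scope ring_scope.

Section Aux.
Variable R : numFieldType.
Implicit Types (f g h : fps R) (p q : {poly R}).

Definition rep (N : nat) p (f : fps R) := forall i, (i <= N)%N -> p`_i = f i.

Lemma rep_mul N p q f g : rep N p f -> rep N q g -> rep N (p * q) (fps_mul f g).
Proof.
move=> hp hq i hi; rewrite coefM /fps_mul; apply: eq_bigr => j _.
have := ltn_ord j => hj.
by rewrite hp ?hq //; lia.
Qed.

Definition tr N f : {poly R} := \poly_(i < N.+1) f i.

Lemma rep_tr N f : rep N (tr N f) f.
Proof. by move=> i hi; rewrite coef_poly ltnS hi. Qed.

Arguments rep_tr : clear implicits.

Lemma rep1 N : rep N 1 (fps1 R).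
Proof. by move=> i _; rewrite coef1. Qed.
Arguments rep1 : clear implicits.

Lemma rep_pow N p f m : rep N p f -> rep N (p ^+ m) (fps_pow f m).
Proof.
move=> hp; elim: m => [|m IH]; first by rewrite expr0; apply: rep1.
by rewrite exprS /fps_pow iterS; apply: rep_mul.
Qed.

Lemma fps_mulC f g : fps_mul f g = fps_mul g f.
Proof.
apply: functional_extensionality => n.
by rewrite -(rep_mul (rep_tr n f) (rep_tr n g) (leqnn n)) mulrC
  (rep_mul (rep_tr n g) (rep_tr n f) (leqnn n)).
Qed.

Lemma fps_mulA f g h : fps_mul f (fps_mul g h) = fps_mul (fps_mul f g) h.
Proof.
apply: functional_extensionality => n.
have r1 := rep_tr n f; have r2 := rep_tr n g; have r3 := rep_tr n h.
rewrite -(rep_mul r1 (rep_mul r2 r3) (leqnn n)) mulrA.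
by rewrite (rep_mul (rep_mul r1 r2) r3).
Qed.

Lemma fps_mul1 f : fps_mul f (fps1 R) = f.
Proof.
apply: functional_extensionality => n.
by rewrite -(rep_mul (rep_tr n f) (rep1 n) (leqnn n)) mulr1 rep_tr.
Qed.

Lemma conv_recl f g n :
  fps_mul f g n.+1 = f 0%N * g n.+1 + \sum_(i < n.+1) f i.+1 * g (n - i)%N.
Proof. by rewrite /fps_mul big_ord_recl subn0. Qed.

Lemma inv_list_nth f n i : (i <= n)%N -> nth 0 (inv_list f n) i = fps_inv f i.
Proof.
elim: n => [|n IH] hi.
  by move: hi; rewrite leqn0 => /eqP ->.
have sz : forall m, size (inv_list f m) = m.+1.
  by elim=> [|m IHm] //=; rewrite size_rcons IHm.
case: (ltnP i n.+1) => h.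
  by rewrite /= nth_rcons sz h IH.
have -> : i = n.+1 by apply/eqP; rewrite eqn_leq hi h.
by [].
Qed.

Lemma fps_invS f n : fps_inv f n.+1 =
  - (f 0%N)^-1 * \sum_(i < n.+1) f i.+1 * fps_inv f (n - i)%N.
Proof.
have sz : forall m, size (inv_list f m) = m.+1.
  by elim=> [|m IHm] //=; rewrite size_rcons IHm.
rewrite /fps_inv /= nth_rcons sz ltnn eqxx; congr (_ * _).
apply: eq_bigr => i _; congr (_ * _).
by rewrite (inv_list_nth f (leq_subr i n)).
Qed.

Lemma fps_mulV f : f 0%N != 0 -> fps_mul f (fps_inv f) = fps1 R.
Proof.
move=> f0; apply: functional_extensionality => n.
case: n => [|n].
  by rewrite /fps_mul big_ord1 /fps_inv /= mulfV // /fps1.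
rewrite conv_recl fps_invS mulrA mulrN mulfV // mulN1r addNr.
by rewrite /fps1.
Qed.

Lemma fps_inv_uniq f g : f 0%N != 0 -> fps_mul f g = fps1 R -> g = fps_inv f.
Proof.
move=> f0 hg; have hi := fps_mulV f0.
apply: functional_extensionality => n.
elim/ltn_ind: n => n IH.
case: n IH => [|n] IH.
  have e1 := f_equal (fun F => F 0%N) hg; have e2 := f_equal (fun F => F 0%N) hi.
  move: e1 e2; rewrite /fps_mul /= !big_ord1 /= => e1 e2.
  by apply: (mulfI f0); rewrite e1 e2.
have e1 := f_equal (fun F => F n.+1) hg; have e2 := f_equal (fun F => F n.+1) hi.
move: e1 e2; rewrite /= !conv_recl.
have -> : \sum_(i < n.+1) f i.+1 * g (n - i)%N =
          \sum_(i < n.+1) f i.+1 * fps_inv f (n - i)%N.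
  by apply: eq_bigr => i _; rewrite IH // ltnS leq_subr.
move=> e1 e2; rewrite -e2 in e1.
by apply: (mulfI f0); apply: (addIr _ e1).
Qed.


Lemma factr_neq0 k : (k`!)%:R != 0 :> R.
Proof. by rewrite pnatr_eq0 -lt0n fact_gt0. Qed.

Lemma half2 : 1 / 2 + 1 / 2 = 1 :> R.
Proof. by rewrite -mulrDl divff // (_ : 1 + 1 = 2%:R) // pnatr_eq0. Qed.

Lemma exp_lin_mul (a b : R) : fps_mul (exp_lin a) (exp_lin b) = exp_lin (a + b).
Proof.
apply: functional_extensionality => n.
rewrite /fps_mul /exp_lin addrC exprDn mulr_suml; apply: eq_bigr => i _.
have hi : (i <= n)%N by rewrite -ltnS.
have hb := bin_fact hi.
have hC : ('C(n, i))%:R = (n`!)%:R / ((i`!)%:R * ((n - i)`!)%:R) :> R.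
  rewrite -hb !natrM mulfK //; by rewrite mulf_neq0 // factr_neq0.
rewrite -(mulr_natr (b ^+ (n - i) * a ^+ i)) hC.
have h1 := factr_neq0 i; have h2 := factr_neq0 (n - i); have h3 := factr_neq0 n.
by field; rewrite ?h1 ?h2 ?h3 ?mulf_neq0.
Qed.

Lemma fps_mul_subl f g h : fps_mul (fps_sub f g) h = fps_sub (fps_mul f h) (fps_mul g h).
Proof.
apply: functional_extensionality => n.
by rewrite /fps_mul /fps_sub -sumrB; apply: eq_bigr => i _; rewrite mulrBl.
Qed.

Lemma zeta_mul (c : R) : fps_mul (zeta_ser R) (exp_lin c) =
  fps_sub (exp_lin (c + 1/2)) (exp_lin (c - 1/2)).
Proof. by rewrite /zeta_ser fps_mul_subl !exp_lin_mul (addrC (1/2)) (addrC (- _)). Qed.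

Definition Bser (la : seq nat) : fps R := fun n => \sum_(c <- contents R la) exp_lin c n.

Lemma iota_ord (F : nat -> R) m : \sum_(r <- iota 0 m) F r = \sum_(r < m) F r.
Proof. by rewrite -(big_mkord xpredT) /index_iota subn0. Qed.

Lemma casimir_eq la : casimir R la = fps_mul (zeta_ser R) (Bser la).
Proof.
apply: functional_extensionality => n.
have -> : fps_mul (zeta_ser R) (Bser la) n =
   \sum_(c <- contents R la) fps_mul (zeta_ser R) (exp_lin c) n.
  rewrite /fps_mul /Bser (exchange_big_dep xpredT) //=.
  by apply: eq_bigr => i _; rewrite mulr_sumr.
rewrite /contents big_flatten big_map iota_ord /casimir; apply: eq_bigr => r _.
rewrite big_map.
have -> : forall m, \sum_(j <- iota 0 m) fps_mul (zeta_ser R) (exp_lin ((j%:R - r%:R) : R)) n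
   = \sum_(0 <= j < m) (exp_lin ((j.+1)%:R - r%:R - 1/2) n - exp_lin (j%:R - r%:R - 1/2) n).
  move=> m; rewrite /index_iota subn0; apply: eq_bigr => j _.
  rewrite zeta_mul /fps_sub; congr (exp_lin _ _ - _).
  rewrite mulrS.
  have h2 : (2%:R : R) != 0 by rewrite pnatr_eq0.
  by field.
rewrite telescope_sumr // sub0r.
by [].
Qed.

Lemma fps_divzM f g : f 0%N = 0 -> fps_divz (fps_mul f g) = fps_mul (fps_divz f) g.
Proof.
move=> f0; apply: functional_extensionality => n.
by rewrite /fps_divz conv_recl f0 mul0r add0r.
Qed.

Lemma zeta0 : zeta_ser R 0%N = 0.
Proof. by rewrite /zeta_ser /fps_sub /exp_lin !expr0 subrr. Qed.

Lemma zeta1 : zeta_ser R 1%N = 1.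
Proof. by rewrite /zeta_ser /fps_sub /exp_lin !expr1 (_ : 1`! = 1%N) // !divr1 opprK half2. Qed.

Lemma fps_div_casimir la : fps_div (casimir R la) (zeta_ser R) = Bser la.
Proof.
rewrite /fps_div casimir_eq fps_divzM ?zeta0 // (fps_mulC _ (Bser la)) -fps_mulA.
by rewrite fps_mulV ?fps_mul1 // /fps_divz zeta1 oner_neq0.
Qed.

Lemma size_contents la : size (contents R la) = psize la.
Proof.
rewrite /contents size_flatten /shape -map_comp.
have -> : [seq (size \o (fun r => [seq (j%:R - r%:R : R) | j <- iota 0 (nth 0%N la r)])) i
          | i <- iota 0 (size la)] = mkseq (nth 0%N la) (size la).
  by rewrite /mkseq; apply: eq_map => r /=; rewrite size_map size_iota.
by rewrite mkseq_nth.
Qed.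

Lemma part1 la : Dp R la = Fser R la.
Proof.
apply: functional_extensionality => n.
rewrite /Fser fps_div_casimir /fps_sub /energy /fpsC /Bser /Dp.
case: n => [|k].
  rewrite mul1r.
  under eq_bigr => c _ do rewrite /exp_lin expr0 fact0 divr1.
  by rewrite big_const_seq count_predT iter_addr_0 size_contents subrr.
rewrite mul0r subr0 /psym mulr_suml; apply: eq_bigr => c _.
by [].
Qed.


Definition eqN (N : nat) p q := forall i, (i <= N)%N -> p`_i = q`_i.

Lemma eqN_refl N p : eqN N p p. Proof. by []. Qed.
Lemma eqN_sym N p q : eqN N p q -> eqN N q p.
Proof. by move=> h i hi; rewrite h. Qed.
Lemma eqN_trans N p q r : eqN N p q -> eqN N q r -> eqN N p r.
Proof. by move=> h1 h2 i hi; rewrite h1 ?h2. Qed.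
Lemma eqN_add N p q p' q' : eqN N p p' -> eqN N q q' -> eqN N (p + q) (p' + q').
Proof. by move=> h1 h2 i hi; rewrite !coefD h1 ?h2. Qed.
Lemma eqN_mul N p q p' q' : eqN N p p' -> eqN N q q' -> eqN N (p * q) (p' * q').
Proof.
move=> h1 h2 i hi; rewrite !coefM; apply: eq_bigr => j _.
have := ltn_ord j => hj.
by rewrite h1 ?h2 //; lia.
Qed.

Lemma eqN_prod N (I : Type) (s : seq I) (F G : I -> {poly R}) :
  (forall x, eqN N (F x) (G x)) -> eqN N (\prod_(x <- s) F x) (\prod_(x <- s) G x).
Proof.
move=> h; apply: (big_ind2 (fun a b => eqN N a b)) => //.
by move=> ????; apply: eqN_mul.
Qed.

Lemma eqN_sum N (I : Type) (s : seq I) (F G : I -> {poly R}) :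
  (forall x, eqN N (F x) (G x)) -> eqN N (\sum_(x <- s) F x) (\sum_(x <- s) G x).
Proof.
move=> h; apply: (big_ind2 (fun a b => eqN N a b)) => //.
by move=> ????; apply: eqN_add.
Qed.

Definition theta p : {poly R} := 'X * p^`().

Lemma coef_theta p i : (theta p)`_i = i%:R * p`_i.
Proof.
rewrite /theta coefXM.
case: i => [|i].
  by rewrite eqxx mul0r.
by rewrite coef_deriv /= mulr_natl.
Qed.

Lemma eqN_theta N p q : eqN N p q -> eqN N (theta p) (theta q).
Proof. by move=> h i hi; rewrite !coef_theta h. Qed.

Lemma thetaM p q : theta (p * q) = theta p * q + p * theta q.
Proof. by rewrite /theta derivM mulrDr mulrA mulrCA. Qed.

Lemma thetaD p q : theta (p + q) = theta p + theta q.
Proof. by rewrite /theta derivD mulrDr. Qed.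

Lemma theta0 : theta 0 = 0.
Proof. by rewrite /theta deriv0 mulr0. Qed.

Lemma thetaC c : theta c%:P = 0.
Proof. by rewrite /theta derivC mulr0. Qed.

Lemma theta1 : theta 1 = 0.
Proof. by rewrite -polyC1 thetaC. Qed.

Lemma thetaZ c p : theta (c *: p) = c *: theta p.
Proof. by rewrite /theta derivZ scalerAr. Qed.

Lemma theta_sum (I : Type) (s : seq I) (F : I -> {poly R}) :
  theta (\sum_(x <- s) F x) = \sum_(x <- s) theta (F x).
Proof. exact: (big_morph _ thetaD theta0). Qed.

Lemma theta_exp p m : theta (p ^+ m.+1) = (p ^+ m * theta p) *+ m.+1.
Proof. by rewrite /theta deriv_exp /= mulrnAr; congr (_ *+ _); rewrite [RHS]mulrC mulrA. Qed.

Definition ordp p (a : nat) := forall i, (i < a)%N -> p`_i = 0.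

Lemma ord_mul p q a b : ordp p a -> ordp q b -> ordp (p * q) (a + b).
Proof.
move=> hp hq i hi; rewrite coefM; apply: big1 => j _.
have := ltn_ord j => hj.
case: (ltnP j a) => hja; first by rewrite hp ?mul0r.
by rewrite hq ?mulr0 //; lia.
Qed.

Lemma ord_pow p m : p`_0 = 0 -> ordp (p ^+ m) m.
Proof.
move=> p0; elim: m => [|m IH]; first by [].
rewrite exprS -add1n; apply: ord_mul => //.
by move=> i; rewrite ltnS leqn0 => /eqP ->.
Qed.

Lemma fps_exp0 f : fps_exp f 0%N = 1.
Proof. by rewrite /fps_exp big_ord1 /fps_pow /= /fps1 /= fact0 divr1. Qed.

Lemma thetaE_eq p N : theta (\sum_(m < N.+1) ((m`!)%:R^-1 : R) *: p ^+ m) =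
  theta p * \sum_(m < N) ((m`!)%:R^-1 : R) *: p ^+ m.
Proof.
rewrite theta_sum big_ord_recl expr0 thetaZ theta1 scaler0 add0r mulr_sumr.
apply: eq_bigr => m _.
rewrite lift0 thetaZ theta_exp -scaler_nat scalerA -scalerAr mulrC.
congr (_ *: _).
rewrite factS natrM invfM.
have h1 : ((m.+1)%:R : R) != 0 by rewrite pnatr_eq0.
  by rewrite mulrA mulfV // mul1r.
by rewrite mulrC.
Qed.

Lemma exp_rec f : f 0%N = 0 -> forall n,
  n%:R * fps_exp f n = \sum_(i < n.+1) (i%:R * f i) * fps_exp f (n - i)%N.
Proof.
move=> f0 n.
pose p := tr n f.
have rp : rep n p f := rep_tr n f.
have p0 : p`_0 = 0 by rewrite rp.
pose E := \sum_(m < n.+1) ((m`!)%:R^-1 : R) *: p ^+ m.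
have c1 : forall j, (j <= n)%N -> E`_j = fps_exp f j.
  move=> j hj; rewrite /E coef_sum /fps_exp.
  rewrite (big_ord_widen n.+1 (fun m => fps_pow f m j / (m`!)%:R)) // [RHS]big_mkcond /=.
  apply: eq_bigr => m _; rewrite coefZ (rep_pow m rp hj) mulrC.
  case: ifP => // hm.
  rewrite -(rep_pow m rp hj) ord_pow ?mul0r //.
  by rewrite ltnNge -ltnS hm.
have c2 : (theta E)`_n = (theta p * E)`_n.
  rewrite /E thetaE_eq big_ord_recr /= mulrDr coefD.
  have -> : (theta p * (((n`!)%:R^-1 : R) *: p ^+ n))`_n = 0.
    rewrite -scalerAr coefZ.
    have -> : (theta p * p ^+ n)`_n = 0.
      apply: (ord_mul (a := 1%N) (b := n)); last by [].
        by move=> i; rewrite ltnS leqn0 => /eqP ->; rewrite coef_theta mul0r.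
      exact: ord_pow.
    by rewrite mulr0.
  by rewrite addr0.
move: c2; rewrite coef_theta coefM c1 // => ->.
apply: eq_bigr => i _; rewrite coef_theta rp; last by rewrite -ltnS.
by rewrite c1 // leq_subr.
Qed.

Lemma rec_uniq (a g h : fps R) : a 0%N = 0 -> g 0%N = h 0%N ->
  (forall n, n%:R * g n = \sum_(i < n.+1) a i * g (n - i)%N) ->
  (forall n, n%:R * h n = \sum_(i < n.+1) a i * h (n - i)%N) -> g = h.
Proof.
move=> a0 e0 hg hh; apply: functional_extensionality => n.
elim/ltn_ind: n => n IH.
case: n IH => [|n] IH //.
have h1 : ((n.+1)%:R : R) != 0 by rewrite pnatr_eq0.
apply: (mulfI h1); rewrite hg hh big_ord_recl [RHS]big_ord_recl a0 !mul0r !add0r.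
apply: eq_bigr => i _; rewrite lift0 IH //.
by rewrite subSS ltnS leq_subr.
Qed.


Lemma coef_prod_lin n (c : 'I_n -> R) k :
  (\prod_(i < n) ((c i)%:P * 'X + 1))`_k =
  \sum_(A : {set 'I_n} | #|A| == k) \prod_(i in A) c i.
Proof.
rewrite bigA_distr coef_sum.
transitivity (\sum_(A in {set 'I_n}) if #|A| == k then \prod_(i in A) c i else 0).
  apply: eq_bigr => A _.
  rewrite big_if /= [X in _ * X]big1 ?mulr1 //.
  rewrite big_split /= -rmorph_prod prodr_const coefCM coefXn.
  case: eqP => [->|h]; first by rewrite eqxx mulr1.
  have/negPf -> : #|A| != k by apply/eqP => e; apply: h.
  by rewrite mulr0.
rewrite -big_mkcond; apply: eq_bigl => A; by [].
Qed.

Definition T (N : nat) (y : R) : {poly R} := \poly_(j < N.+1) y ^+ j.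

Lemma T_coef N y i : (T N y)`_i = if (i <= N)%N then y ^+ i else 0.
Proof. by rewrite coef_poly ltnS. Qed.

Lemma hsym_coef (xs : seq R) k :
  hsym k xs = (\prod_(i < size xs) T k xs`_i)`_k.
Proof.
rewrite /T; under eq_bigr => i _ do rewrite poly_def.
rewrite bigA_distr_bigA coef_sum /hsym [LHS]big_mkcond /=.
apply: eq_bigr => m _.
under [in RHS]eq_bigr => i _ do rewrite -mul_polyC.
rewrite big_split /= -rmorph_prod prodrXr coefCM coefXn eq_sym.
by case: ifP; rewrite ?mulr1 ?mulr0.
Qed.


Lemma eqN_T j N y : (j <= N)%N -> eqN j (T j y) (T N y).
Proof. by move=> hj i hi; rewrite !T_coef hi (leq_trans hi hj). Qed.

Lemma G1 N y : eqN N ((1 - y%:P * 'X) * T N y) 1.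
Proof.
move=> i hi; rewrite mulrBl mul1r coefB -mulrA coefCM coefXM coef1 T_coef hi.
case: i hi => [|i] hi; first by rewrite eqxx mulr0 subr0 expr0.
rewrite /= T_coef (ltnW hi) exprS subrr.
by [].
Qed.

Lemma thetaB p q : theta (p - q) = theta p - theta q.
Proof. by rewrite /theta derivB mulrBr. Qed.

Lemma thetaCX c : theta (c%:P * 'X) = c%:P * 'X.
Proof. by rewrite thetaM thetaC mul0r add0r /theta derivX mulr1. Qed.

Lemma theta_T N y : eqN N (theta (T N y)) (T N y * (y%:P * 'X * T N y)).
Proof.
set A := 1 - y%:P * 'X.
have hAT := @G1 N y; rewrite -/A in hAT.
have h1 : eqN N (theta (A * T N y)) 0.
  by rewrite -theta1; apply: eqN_theta.
have h2 : A * theta (T N y) = theta (A * T N y) + y%:P * 'X * T N y.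
  by rewrite thetaM /A thetaB theta1 thetaCX sub0r mulNr [RHS]addrC addNKr.
have h3 : eqN N (A * theta (T N y)) (y%:P * 'X * T N y).
  rewrite h2 -[X in eqN _ _ X]add0r; apply: eqN_add => //.
have h4 : eqN N (theta (T N y)) ((T N y * A) * theta (T N y)).
  rewrite -[X in eqN _ X _]mul1r; apply: eqN_mul => //.
  by apply: eqN_sym; rewrite mulrC.
apply: (eqN_trans h4); rewrite -mulrA; apply: eqN_mul => //.
Qed.

Lemma theta_lin N c : eqN N (theta (c%:P * 'X + 1))
  ((c%:P * 'X + 1) * (c%:P * 'X * T N (- c))).
Proof.
rewrite thetaD theta1 addr0 thetaCX mulrCA.
rewrite -[X in eqN _ X _]mulr1; apply: eqN_mul => //.
apply: eqN_sym.
have -> : c%:P * 'X + 1 = 1 - (- c)%:P * 'X by rewrite polyCN mulNr opprK addrC.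
exact: G1.
Qed.

Lemma theta_prod N (I : Type) (s : seq I) (F U : I -> {poly R}) :
  (forall x, eqN N (theta (F x)) (F x * U x)) ->
  eqN N (theta (\prod_(x <- s) F x)) ((\prod_(x <- s) F x) * \sum_(x <- s) U x).
Proof.
move=> h; elim: s => [|a s IH].
  by rewrite !big_nil theta1 mulr0.
rewrite !big_cons thetaM.
have -> : F a * \prod_(j <- s) F j * (U a + \sum_(j <- s) U j) =
   F a * U a * \prod_(j <- s) F j + F a * ((\prod_(j <- s) F j) * \sum_(j <- s) U j).
  by rewrite mulrDr -!mulrA; congr (_ + _); rewrite (mulrC (U a)).
by apply: eqN_add; apply: eqN_mul.
Qed.


Lemma psym_ord k (xs : seq R) : psym k xs = \sum_(i < size xs) xs`_i ^+ k.
Proof. by rewrite /psym (big_nth 0) big_mkord. Qed.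

Lemma Dh_rep la n :
  rep n (\prod_(i < size (contents R la)) T n (contents R la)`_i) (Dh R la).
Proof.
move=> j hj; rewrite /Dh hsym_coef.
have := @eqN_prod j _ (index_enum 'I_(size (contents R la)))
   (fun i => T j (contents R la)`_i) (fun i => T n (contents R la)`_i)
   (fun i => @eqN_T j n _ hj).
by move=> h; rewrite h.
Qed.

Lemma Dh_rec la n : n%:R * Dh R la n = \sum_(i < n.+1)
  (if i == 0%N :> nat then 0 else \sum_(j < size (contents R la))
      (contents R la)`_j * (contents R la)`_j ^+ i.-1) * Dh R la (n - i)%N.
Proof.
set xs := contents R la.
move: (@Dh_rep la n) => rH; rewrite -/xs in rH.
have hth := @theta_prod n _ (index_enum 'I_(size xs)) (fun i => T n xs`_i)
   (fun i => (xs`_i)%:P * 'X * T n xs`_i) (fun i => @theta_T n xs`_i).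
rewrite -(rH n (leqnn n)) -coef_theta hth // mulrC coefM.
apply: eq_bigr => i _; rewrite rH ?leq_subr //; congr (_ * _).
rewrite coef_sum; case: ifP => hi.
  by apply: big1 => j _; rewrite -mulrA coefCM coefXM hi mulr0.
apply: eq_bigr => j _; rewrite -mulrA coefCM coefXM hi T_coef.
have -> : (i.-1 <= n)%N by have := ltn_ord i; lia.
by [].
Qed.

Lemma Dsig_rep la n :
  rep n (\prod_(i < size (contents R la)) (((contents R la)`_i)%:P * 'X + 1)) (Dsig R la).
Proof. by move=> j hj; rewrite coef_prod_lin. Qed.

Lemma Dsig_rec la n : n%:R * Dsig R la n = \sum_(i < n.+1)
  (if i == 0%N :> nat then 0 else \sum_(j < size (contents R la))
      (contents R la)`_j * (- (contents R la)`_j) ^+ i.-1) * Dsig R la (n - i)%N.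
Proof.
set xs := contents R la.
move: (@Dsig_rep la n) => rH; rewrite -/xs in rH.
have hth := @theta_prod n _ (index_enum 'I_(size xs)) (fun i => (xs`_i)%:P * 'X + 1)
   (fun i => (xs`_i)%:P * 'X * T n (- xs`_i)) (fun i => @theta_lin n xs`_i).
rewrite -(rH n (leqnn n)) -coef_theta hth // mulrC coefM.
apply: eq_bigr => i _; rewrite rH ?leq_subr //; congr (_ * _).
rewrite coef_sum; case: ifP => hi.
  by apply: big1 => j _; rewrite -mulrA coefCM coefXM hi mulr0.
apply: eq_bigr => j _; rewrite -mulrA coefCM coefXM hi T_coef.
have -> : (i.-1 <= n)%N by have := ltn_ord i; lia.
by [].
Qed.

Lemma iter_zt (s : R) k : (iter k.+1 (ztheta s) (log_z R)).1 = 0 /\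
  forall n, (iter k.+1 (ztheta s) (log_z R)).2 n = s ^+ k.+1 * (k`!)%:R * (n == k.+1)%:R.
Proof.
elim: k => [|k [IH1 IH2]].
  split => // n; rewrite /= mulr0 addr0 mul1r expr1 fact0 mulr1.
  by [].
rewrite iterS; split => // n.
set it := iter k.+1 _ _ in IH1 IH2 *.
change (s * (it.1 * (n == 1%N)%:R + (n.-1)%:R * it.2 n.-1) = s ^+ k.+2 * (k.+1)`!%:R * (n == k.+2)%:R).
rewrite IH1 mul0r add0r IH2.
case: n => [|n] /=; first by rewrite !mulr0.
case: (eqVneq n k.+1) => [->|hn]; last first.
  by rewrite eqSS (negPf hn) !mulr0n !mulr0.
rewrite eqxx !mulr1 factS natrM !exprS.
ring.
Qed.

Lemma logsum_val (s : R) F m : logsum s F m.+1 = F m.+1 * (s ^+ m.+1 * (m`!)%:R).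
Proof.
rewrite /logsum big_nat_recr // (proj2 (iter_zt s m)) eqxx mulr1.
rewrite big_nat_cond big1; first by rewrite /= add0r.
move=> k /andP[/andP[hk1 hk2] _].
case: k hk1 hk2 => [//|k] _ hk.
by rewrite (proj2 (iter_zt s k)) (gtn_eqF hk) mulr0n !mulr0.
Qed.

Lemma logsum0 (s : R) F : logsum s F 0 = 0.
Proof. by rewrite /logsum big_geq. Qed.


Lemma Dh0 la : Dh R la 0%N = 1.
Proof.
rewrite -(@Dh_rep la 0 0 (leqnn 0)).
have h := @eqN_prod 0 _ (index_enum 'I_(size (contents R la)))
   (fun i => T 0 (contents R la)`_i) (fun i => 1).
rewrite h //; first by rewrite big1_eq coef1.
by move=> x i; rewrite leqn0 => /eqP ->; rewrite T_coef expr0 coef1.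
Qed.

Lemma Dsig0 la : Dsig R la 0%N = 1.
Proof.
rewrite -(@Dsig_rep la 0 0 (leqnn 0)).
have h := @eqN_prod 0 _ (index_enum 'I_(size (contents R la)))
   (fun i => ((contents R la)`_i)%:P * 'X + 1) (fun i => 1).
rewrite h //; first by rewrite big1_eq coef1.
move=> x i; rewrite leqn0 => /eqP ->.
by rewrite coefD coefCM coefX coef1 /= mulr0n mulr0 add0r.
Qed.

Lemma part2 la : Dh R la = fps_exp (logsum 1 (Fser R la)).
Proof.
rewrite -part1; set L := logsum 1 (Dp R la).
have L0 : L 0%N = 0 by rewrite /L logsum0.
have aL : forall i : nat, i%:R * L i = (if i == 0%N then 0 else
     \sum_(j < size (contents R la)) (contents R la)`_j * (contents R la)`_j ^+ i.-1).
  case=> [|m]; first by rewrite L0 mulr0.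
  rewrite /L logsum_val /Dp psym_ord expr1n mul1r /=.
  under [RHS]eq_bigr do rewrite -exprS.
  rewrite factS natrM.
  have h1 := factr_neq0 m.
  have h2 : ((m.+1)%:R : R) != 0 by rewrite pnatr_eq0.
  by field; rewrite h1 -[1 + _]mulrS h2.
apply: (@rec_uniq (fun i => i%:R * L i)).
- by rewrite mul0r.
- by rewrite Dh0 fps_exp0.
- by move=> n; rewrite Dh_rec; apply: eq_bigr => i _; rewrite aL.
- exact: exp_rec.
Qed.

Lemma part3 la : Dsig R la = fps_exp (fps_opp (logsum (-1) (Fser R la))).
Proof.
rewrite -part1; set L := fps_opp (logsum (-1) (Dp R la)).
have L0 : L 0%N = 0 by rewrite /L /fps_opp logsum0 oppr0.
have aL : forall i : nat, i%:R * L i = (if i == 0%N then 0 else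
     \sum_(j < size (contents R la)) (contents R la)`_j * (- (contents R la)`_j) ^+ i.-1).
  case=> [|m]; first by rewrite L0 mulr0.
  rewrite /L /fps_opp logsum_val /Dp psym_ord /=.
  under [RHS]eq_bigr do rewrite exprNn mulrCA -exprS.
  rewrite -mulr_sumr.
  rewrite [(-1) ^+ m.+1]exprS factS natrM.
  have h1 := factr_neq0 m.
  have h2 : ((m.+1)%:R : R) != 0 by rewrite pnatr_eq0.
  by field; rewrite h1 -[1 + _]mulrS h2.
apply: (@rec_uniq (fun i => i%:R * L i)).
- by rewrite mul0r.
- by rewrite Dsig0 fps_exp0.
- by move=> n; rewrite Dsig_rec; apply: eq_bigr => i _; rewrite aL.
- exact: exp_rec.
Qed.

Lemma part4 la : Dh R la = fps_inv (fps_negvar (Dsig R la)).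
Proof.
set xs := contents R la.
have hQ : forall n, rep n (\prod_(i < size xs) ((- xs`_i)%:P * 'X + 1))
                       (fps_negvar (Dsig R la)).
  move=> n j _; rewrite coef_prod_lin /fps_negvar /Dsig /esym mulr_sumr.
  apply: eq_bigr => A /eqP hA; rewrite prodrN hA.
  by [].
have hM : fps_mul (fps_negvar (Dsig R la)) (Dh R la) = fps1 R.
  apply: functional_extensionality => n.
  rewrite -(rep_mul (hQ n) (@Dh_rep la n) (leqnn n)) -big_split /=.
  have h := @eqN_prod n _ (index_enum 'I_(size xs))
    (fun i => ((- xs`_i)%:P * 'X + 1) * T n xs`_i) (fun i => 1).
  rewrite h //; first by rewrite big1_eq coef1.
  move=> i; have -> : (- xs`_i)%:P * 'X + 1 = 1 - (xs`_i)%:P * 'X.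
    by rewrite polyCN mulNr addrC.
  exact: G1.
have hQ0 : fps_negvar (Dsig R la) 0%N != 0.
  apply/eqP => h0.
  have := f_equal (fun F => F 0%N) hM; rewrite /fps_mul big_ord1 /= h0 mul0r /fps1 /=.
  by move/eqP; rewrite eq_sym oner_eq0.
exact: fps_inv_uniq hQ0 hM.
Qed.

End Aux.

Theorem proposition5p1 (R : numFieldType) (la : seq nat) :
  is_partition la ->
  [/\ Dp R la = Fser R la,
      Dh R la = fps_exp (logsum 1 (Fser R la)),
      Dsig R la = fps_exp (fps_opp (logsum (-1) (Fser R la)))
    & Dh R la = fps_inv (fps_negvar (Dsig R la))].
Proof.
move=> _; split; [exact: part1 | exact: part2 | exact: part3 | exact: part4].
Qed.
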